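(* Let $\lambda>1$, suppose $(P_1)$ is feasible, and let $y^*$ be an optimal solution to $\max_{y\in\mathbb{R}^{\mathcal{S}}_{\ge0}}g_\lambda(y)$. Then $\sum_{S\in\mathcal{S}}b_Sy^*_S\le\frac{\mathrm{OPT}(1)-\mathrm{OPT}(\lambda)}{\lambda-1}$.
   Context: Setting: $G=(V,E)$ undirected connected graph, costs $c_e\ge0$, a chain $\mathcal{S}$ of node sets $S_1\subsetneq\dots\subsetneq S_\ell\subsetneq V$, integers $b_S$. $E(S)$ = edges with both ends in $S$, $\delta(S)$ = edges with exactly one end in $S$, $z(F)=\sum_{e\in F}z_e$. $P_{ST}(G)=\{x\in\mathbb{R}^E_{\ge0}: x(E(S))\le|S|-1\ \forall\emptyset\ne S\subsetneq V,\ x(E)=|V|-1\}$. For $\lambda\ge1$, $(P_\lambda)$: minimize $\sum_ec_ex_e$ over $x\in P_{ST}(G)$ with $x(\delta(S))\le\lambda b_S$ for all $S\in\mathcal{S}$; $\mathrm{OPT}(\lambda)$ is its optimal value. $g_\lambda(y)=\min_{x\in P_{ST}(G)}\big(\sum_ec_ex_e+\sum_{S\in\mathcal{S}}(x(\delta(S))-\lambda b_S)y_S\big)$ for $y\in\mathbb{R}^{\mathcal{S}}_{\ge0}$. *)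

(* Defs.v *)
From HB Require Import structures.
From mathcomp Require Import classical_sets reals.
From mathcomp Require Import all_boot all_order all_algebra.
Set Implicit Arguments. Unset Strict Implicit. Unset Printing Implicit Defensive.
Import Order.TTheory GRing.Theory Num.Theory.
Local Open Scope ring_scope.

(* Simple undirected graph on a finite vertex type V given by a symmetric,
   irreflexive adjacency relation; edges are the 2-element vertex sets {u,v}. *)
Section Defs.
Variables (R : realType) (V : finType) (adj : rel V).

Definition Eset : {set {set V}} :=
  [set A : {set V} | [exists u, exists v, adj u v && (A == [set u; v])]].

Definition Ein (S : {set V}) : {set {set V}} := [set A in Eset | A \subset S].
Definition delta (S : {set V}) : {set {set V}} :=
  [set A in Eset | #|A :&: S| == 1%N].

Definition xsum (x : {set V} -> R) (F : {set {set V}}) : R := \sum_(A in F) x A.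

Definition in_PST (x : {set V} -> R) : Prop :=
  [/\ forall A, A \in Eset -> 0 <= x A,
      forall S : {set V}, S != set0 -> S \proper [set: V] ->
        xsum x (Ein S) <= (#|S|%:R - 1)
    & xsum x Eset = #|V|%:R - 1].

Definition cost (c : {set V} -> R) (x : {set V} -> R) : R :=
  \sum_(A in Eset) c A * x A.

Variables (l : nat) (S : 'I_l -> {set V}) (b : 'I_l -> int) (c : {set V} -> R).

Definition feasible (lam : R) (x : {set V} -> R) : Prop :=
  in_PST x /\ forall i : 'I_l, xsum x (delta (S i)) <= lam * (b i)%:~R.

Definition OPT (lam : R) : R := inf [set cost c x | x in [set x | feasible lam x]]%classic.

Definition glag (lam : R) (y : 'I_l -> R) : R :=
  inf [set cost c x + \sum_(i < l) (xsum x (delta (S i)) - lam * (b i)%:~R) * y i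
      | x in [set x | in_PST x]]%classic.

End Defs.

(* Main.v *)
Require Import Defs.
From HB Require Import structures.
From mathcomp Require Import classical_sets reals.
From mathcomp Require Import all_boot all_order all_algebra lra ring.
From Stdlib Require Import Classical.
Import Order.TTheory GRing.Theory Num.Theory.
Local Open Scope ring_scope.
Section FM.
Variables (R : realType) (T : finType).

Definition form := ((T -> R) * R)%type.
Definition ev (D : {set T}) (f : form) (x : T -> R) : R :=
  \sum_(t in D) f.1 t * x t + f.2.
Definition fzero : form := (fun _ => 0, 0).
Definition fadd (f g : form) : form := (fun t => f.1 t + g.1 t, f.2 + g.2).
Definition fscale (a : R) (f : form) : form := (fun t => a * f.1 t, a * f.2).

Inductive cone (I : Type) (L : I -> form) : form -> Prop :=
| cone_gen i : cone I L (L i)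
| cone_zero : cone I L fzero
| cone_add f g : cone I L f -> cone I L g -> cone I L (fadd f g)
| cone_scale a f : 0 <= a -> cone I L f -> cone I L (fscale a f).
Arguments cone {I}.

Lemma ev0 D x : ev D fzero x = 0.
Proof. by rewrite /ev /= big1 ?addr0 // => t _; rewrite mul0r. Qed.
Lemma evD D f g x : ev D (fadd f g) x = ev D f x + ev D g x.
Proof.
rewrite /ev /=. under eq_bigr do rewrite mulrDl. rewrite big_split /=.
by rewrite addrACA.
Qed.
Lemma evZ D a f x : ev D (fscale a f) x = a * ev D f x.
Proof.
by rewrite /ev /= mulrDr mulr_sumr; congr (_ + _); apply: eq_bigr => t _; rewrite mulrA.
Qed.

Lemma interval (ls us : seq R) : (forall a b, a \in ls -> b \in us -> a <= b) ->
  exists v, (forall a, a \in ls -> a <= v) /\ (forall b, b \in us -> v <= b).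
Proof.
elim: ls => [|l ls IH] H.
  elim: us {H} => [|u us IHu]; first by exists 0.
  have [v [_ Hv]] := IHu; exists (Num.min u v); split => // b.
  rewrite inE => /orP[/eqP->|/Hv hb]; first by rewrite ge_min lexx.
  by rewrite ge_min hb orbT.
have [v [Hl Hu]] : exists v, (forall a, a \in ls -> a <= v) /\
   (forall b, b \in us -> v <= b).
  by apply: IH => a b ha hb; apply: H => //; rewrite inE ha orbT.
exists (Num.max l v); split.
  move=> a; rewrite inE => /orP[/eqP->|/Hl ha]; first by rewrite le_max lexx.
  by rewrite le_max ha orbT.
move=> b hb; rewrite ge_max Hu // andbT; apply: H => //; by rewrite inE eqxx.
Qed.

Lemma keyineq (rp rq ap aq : R) : 0 < ap -> aq < 0 ->
  (- aq * rp + ap * rq <= 0) -> - rq / aq <= - rp / ap.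
Proof.
move=> hp hq h; rewrite ler_ndivrMr // mulrAC ler_pdivrMr //.
rewrite mulNr mulNr; nra.
Qed.

Lemma cone_mono (I J : Type) (L : I -> form) (L' : J -> form) g :
  (forall j, cone L (L' j)) -> cone L' g -> cone L g.
Proof. move=> H; elim => *; by [apply: H|constructor|constructor|constructor]. Qed.

Lemma ev_set0 f x : ev set0 f x = f.2.
Proof. by rewrite /ev big_pred0 ?add0r // => t; rewrite inE. Qed.

Lemma ev_upd (D : {set T}) (t0 : T) (f : form) (x : T -> R) (v : R) : t0 \in D ->
  ev D f (fun t => if t == t0 then v else x t) = ev (D :\ t0) f x + f.1 t0 * v.
Proof.
move=> Ht0; rewrite /ev (bigD1 t0) //= eqxx.
rewrite [RHS]addrC addrA; congr (_ + _ + _).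
apply: eq_big => t; first by rewrite in_setD1 andbC.
by move=> /andP[_ /negbTE ->].
Qed.

Lemma FM_aux n : forall (D : {set T}), #|D| = n ->
  forall (I : finType) (L : I -> form),
  (forall x, exists i, 0 < ev D (L i) x) ->
  exists g, cone L g /\ 0 < g.2 /\ (forall t, t \in D -> g.1 t = 0).
Proof.
elim: n => [|n IH] D HD I L H.
  have D0 : D = set0 by apply/eqP; rewrite -cards_eq0 HD.
  have [i Hi] := H (fun _ => 0).
  exists (L i); split; first exact: cone_gen.
  by rewrite D0 ev_set0 in Hi; split => // t; rewrite D0 inE.
have [t0 Ht0] : exists t0, t0 \in D.
  by apply/card_gt0P; rewrite HD.
pose a i := (L i).1 t0.
pose comb (p q : I) : form := fadd (fscale (- a q) (L p)) (fscale (a p) (L q)).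
pose L' (k : (I + I * I)%type) : form :=
  match k with
  | inl i => if a i == 0 then L i else fzero
  | inr pq => if (0 < a pq.1) && (a pq.2 < 0) then comb pq.1 pq.2 else fzero
  end.
have HD' : #|D :\ t0| = n by move: HD; rewrite (cardsD1 t0) Ht0 add1n; case.
have H' : forall x, exists k, 0 < ev (D :\ t0) (L' k) x.
  move=> x; apply: NNPP => Hn.
  have Hle : forall k, ev (D :\ t0) (L' k) x <= 0.
    move=> k; rewrite leNgt; apply/negP => hk; apply: Hn; by exists k.
  pose r i := ev (D :\ t0) (L i) x.
  have /interval [v [Hlo Hhi]] : forall aa bb,
     aa \in [seq - r i / a i | i <- enum I & a i < 0] ->
     bb \in [seq - r i / a i | i <- enum I & 0 < a i] -> aa <= bb.
    move=> ? ? /mapP[q]; rewrite mem_filter => /andP[hq _] ->.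
    move=> /mapP[p]; rewrite mem_filter => /andP[hp _] ->.
    have := Hle (inr (p, q)); rewrite /= hp hq /= evD !evZ -/(r p) -/(r q) => h.
    exact: keyineq.
  have [i Hi] := H (fun t => if t == t0 then v else x t).
  move: Hi; rewrite ev_upd // -/(r i) -/(a i) => Hi.
  have [a0|an|ap] := comparable_ltgtP (comparableT 0 (a i)).
  - have hm : i \in [seq j <- enum I | 0 < a j] by rewrite mem_filter a0 mem_enum.
    have := Hhi _ (map_f (fun j : I => - r j / a j) hm).
    rewrite ler_pdivlMr // mulrC => h; move: Hi h.
    move: (r i) (a i * v) => u w; lra.
  - have hm : i \in [seq j <- enum I | a j < 0] by rewrite mem_filter an mem_enum.
    have := Hlo _ (map_f (fun j : I => - r j / a j) hm).
    rewrite ler_ndivrMr // mulrC => h; move: Hi h.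
    move: (r i) (a i * v) => u w; lra.
  - have := Hle (inl i); rewrite /= -ap eqxx -/(r i) => h.
    move: Hi; rewrite -ap mul0r addr0 => Hi; move: h Hi.
    move: (r i) => u; lra.
have [g [Hg [Hg2 Hg1]]] := IH _ HD' _ L' H'.
exists g; split.
  apply: (@cone_mono _ _ L L' g _ Hg) => -[i|[p q]] /=.
    by case: ifP => _; constructor.
  case: ifP => [/andP[hp hq]|_]; last by constructor.
  rewrite /comb; apply: cone_add; apply: cone_scale; try constructor.
    by rewrite oppr_ge0 ltW.
  exact: ltW.
split => // t Ht.
have [->|ne] := eqVneq t t0; last by apply: Hg1; rewrite in_setD1 ne.
have : forall k, (L' k).1 t0 = 0.
  move=> [i|[p q]] /=; first by case: ifP => [/eqP|].
  case: ifP => // _; rewrite /comb /= -/(a p) -/(a q); ring.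
elim: Hg {Hg1 Hg2} => [k|||s f hs _ IHs] //=.
- by move=> f g' _ IH1 _ IH2 h; rewrite IH1 // IH2 // addr0.
- by move=> h; rewrite IHs // mulr0.
Qed.

End FM.
Arguments ev {R T}. Arguments fzero {R T}. Arguments fadd {R T}.
Arguments fscale {R T}. Arguments cone {R T I}.
Arguments cone_gen {R T I L}. Arguments cone_zero {R T I L}.



Section Main.
Variables (R : realType) (V : finType) (adj : rel V).
Variables (l : nat) (S : 'I_l -> {set V}) (b : 'I_l -> int) (c : {set V} -> R).

Lemma sum_ind (D F : {set {set V}}) (x : {set V} -> R) : F \subset D ->
  \sum_(t in D) (t \in F)%:R * x t = \sum_(t in F) x t.
Proof.
move=> sFD; rewrite (big_setID F) /= [X in _ + X]big1 ?addr0.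
  rewrite (setIidPr sFD); apply: eq_bigr => t ->; by rewrite mul1r.
by move=> t; rewrite in_setD => /andP[/negbTE -> _]; rewrite mul0r.
Qed.


Lemma Ein_sub S0 : Ein adj S0 \subset Eset adj.
Proof. by apply/subsetP => A; rewrite inE => /andP[]. Qed.
Lemma delta_sub S0 : delta adj S0 \subset Eset adj.
Proof. by apply/subsetP => A; rewrite inE => /andP[]. Qed.

Definition hh (lam : R) (x : {set V} -> R) (i : 'I_l) :=
  xsum x (delta adj (S i)) - lam * (b i)%:~R.

Definition Ifam := ((({set V} + {set V}) + bool) + 'I_l + unit)%type.

Definition Lfam (lam z : R) (k : Ifam) : form R {set V} :=
  match k with
  | inl (inl (inl (inl A))) =>
      if A \in Eset adj then (fun t => - (t == A)%:R, 0) else fzero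
  | inl (inl (inl (inr S0))) =>
      if (S0 != set0) && (S0 \proper [set: V])
      then (fun t => (t \in Ein adj S0)%:R, - (#|S0|%:R - 1))
      else fzero
  | inl (inl (inr bb)) =>
      if bb then (fun _ => 1, - (#|V|%:R - 1)) else (fun _ => -1, #|V|%:R - 1)
  | inl (inr i) => (fun t => (t \in delta adj (S i))%:R, - (lam * (b i)%:~R))
  | inr _ => (c, - z)
  end.


Definition Qp (lam z : R) (g : form R {set V}) :=
  exists mu (y : 'I_l -> R), 0 <= mu /\ (forall i, 0 <= y i) /\
   forall x, in_PST adj x -> ev (Eset adj) g x <=
     mu * (cost adj c x - z) + \sum_i hh lam x i * y i.

Lemma Q0 lam z f : (forall x, in_PST adj x -> ev (Eset adj) f x <= 0) -> Qp lam z f.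
Proof.
move=> H; exists 0, (fun _ => 0); split=> //; split=> // x hx.
rewrite mul0r add0r big1 ?H // => i _; by rewrite mulr0.
Qed.

Lemma ev_all (f : form R {set V}) x :
  ev (Eset adj) f x = \sum_(t in Eset adj) f.1 t * x t + f.2.
Proof. by []. Qed.

Lemma sum_one (x : {set V} -> R) A : A \in Eset adj ->
  \sum_(t in Eset adj) (t == A)%:R * x t = x A.
Proof.
move=> HA; rewrite (bigD1 A) //= eqxx mul1r big1 ?addr0 //.
by move=> t /andP[_ /negbTE ->]; rewrite mul0r.
Qed.

Lemma Qgen lam z k : Qp lam z (Lfam lam z k).
Proof.
case: k => [[[[A|S0]|bb]|i]|u].
- apply: Q0 => x [hx _ _]; rewrite /=; case: ifP => HA; last by rewrite ev0.
  rewrite ev_all /=; under eq_bigr do rewrite mulNr; rewrite sumrN sum_one //.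
  by rewrite addr0 oppr_le0 hx.
- apply: Q0 => x [_ hx _]; rewrite /=; case: ifP => [/andP[h1 h2]|_]; last by rewrite ev0.
  rewrite ev_all /= sum_ind ?Ein_sub //; have := hx _ h1 h2; rewrite /xsum; lra.
- apply: Q0 => x [_ _ hx]; rewrite /=; move: hx; rewrite /xsum.
  case: bb; rewrite ev_all /=.
    move=> h; rewrite -h; under eq_bigr do rewrite mul1r; lra.
  move=> h; rewrite -h; under eq_bigr do rewrite mulN1r; rewrite sumrN; lra.
- exists 0, (fun j => (j == i)%:R); split=> //; split=> [j|x _]; first by case: (j == i).
  rewrite mul0r add0r (bigD1 i) //= eqxx mulr1 big1 ?addr0.
    by rewrite ev_all /= sum_ind ?delta_sub.
  by move=> j /negbTE ->; rewrite mulr0.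
- exists 1, (fun _ => 0); split=> //; split=> // x _.
  rewrite big1 ?addr0 ?mul1r ?ev_all //= => i _; by rewrite mulr0.
Qed.

Lemma Qcone lam z g : cone (Lfam lam z) g -> Qp lam z g.
Proof.
elim => [k|||].
- exact: Qgen.
- by apply: Q0 => x _; rewrite ev0.
- move=> f g' _ [m1 [y1 [h1 [h1' H1]]]] _ [m2 [y2 [h2 [h2' H2]]]].
  exists (m1 + m2), (fun i => y1 i + y2 i); split; first by rewrite addr_ge0.
  split=> [i|x hx]; first by rewrite addr_ge0.
  rewrite evD; under eq_bigr do rewrite mulrDr; rewrite big_split /=.
  have := H1 x hx; have := H2 x hx; lra.
- move=> a f ha _ [m1 [y1 [h1 [h1' H1]]]].
  exists (a * m1), (fun i => a * y1 i); split; first by rewrite mulr_ge0.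
  split=> [i|x hx]; first by rewrite mulr_ge0.
  rewrite evZ.
  have -> : \sum_i hh lam x i * (a * y1 i) = a * \sum_i hh lam x i * y1 i.
    by rewrite mulr_sumr; apply: eq_bigr => i _; rewrite mulrCA.
  by rewrite -mulrA -mulrDr ler_wpM2l // H1.
Qed.


Lemma cost_ge0 x : (forall e, e \in Eset adj -> 0 <= c e) -> in_PST adj x ->
  0 <= cost adj c x.
Proof.
move=> Hc [hx _ _]; apply: sumr_ge0 => A HA; by rewrite mulr_ge0 ?Hc ?hx.
Qed.

Lemma OPT_le lam x : (forall e, e \in Eset adj -> 0 <= c e) ->
  feasible adj S b lam x -> OPT adj S b c lam <= cost adj c x.
Proof.
move=> Hc hf; apply: (ge_inf (E := [set cost adj c x | x in [set x | feasible adj S b lam x]]%classic)).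
  exists 0 => _ [y hy <-]; exact: cost_ge0 hy.1.
by exists x.
Qed.

Lemma duality lam z x0 : (forall e, e \in Eset adj -> 0 <= c e) ->
  feasible adj S b lam x0 -> z < OPT adj S b c lam ->
  exists y : 'I_l -> R, (forall i, 0 <= y i) /\
    forall x, in_PST adj x -> z < cost adj c x + \sum_i hh lam x i * y i.
Proof.
move=> Hc Hx0 Hz.
have H : forall x, exists k, 0 < ev (Eset adj) (Lfam lam z k) x.
  move=> x; apply: NNPP => Hn.
  have Hle : forall k, ev (Eset adj) (Lfam lam z k) x <= 0.
    move=> k; rewrite leNgt; apply/negP => hk; apply: Hn; by exists k.
  have Hpst : in_PST adj x.
    split.
    - move=> A HA; have := Hle (inl (inl (inl (inl A)))).
      rewrite /= HA ev_all /=; under eq_bigr do rewrite mulNr.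
      by rewrite sumrN sum_one // addr0 oppr_le0.
    - move=> S0 h1 h2; have := Hle (inl (inl (inl (inr S0)))).
      rewrite /= h1 h2 ev_all /= sum_ind ?Ein_sub // /xsum; lra.
    - have := Hle (inl (inl (inr true))); have := Hle (inl (inl (inr false))).
      rewrite !ev_all /= /xsum.
      have -> : \sum_(t in Eset adj) (-1) * x t = - \sum_(t in Eset adj) x t.
        by rewrite -sumrN; apply: eq_bigr => t _; rewrite mulN1r.
      have -> : \sum_(t in Eset adj) 1 * x t = \sum_(t in Eset adj) x t.
        by apply: eq_bigr => t _; rewrite mul1r.
      lra.
  have Hf : feasible adj S b lam x.
    split=> // i; have := Hle (inl (inr i)).
    rewrite ev_all /= sum_ind ?delta_sub // /xsum; lra.
  have Hcost : cost adj c x <= z by have := Hle (inr tt); rewrite ev_all /= /cost; lra.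
  have := @OPT_le lam x Hc Hf; lra.
have [g [Hg [Hg2 Hg1]]] := @FM_aux R _ _ (Eset adj) (erefl _) _ _ H.
have [mu [y [hmu [hy HQ]]]] := @Qcone lam z g Hg.
have evg x : ev (Eset adj) g x = g.2.
  by rewrite ev_all big1 ?add0r // => t ht; rewrite Hg1 // mul0r.
have hh0 : \sum_i hh lam x0 i * y i <= 0.
  rewrite -oppr_ge0 -sumrN; apply: sumr_ge0 => i _.
  rewrite -mulNr mulr_ge0 // oppr_ge0 /hh subr_le0; exact: Hx0.2.
have mupos : 0 < mu.
  rewrite lt_neqAle hmu andbT; apply/negP => /eqP m0.
  have := HQ x0 Hx0.1; rewrite evg -m0 mul0r add0r; lra.
exists (fun i => y i / mu); split=> [i|x hx]; first by rewrite divr_ge0 // ltW.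
have := HQ x hx; rewrite evg => h.
have -> : \sum_i hh lam x i * (y i / mu) = (\sum_i hh lam x i * y i) / mu.
  by rewrite mulr_suml; apply: eq_bigr => i _; rewrite mulrA.
rewrite -subr_gt0.
have -> : cost adj c x + (\sum_i hh lam x i * y i) / mu - z =
  (mu * (cost adj c x - z) + \sum_i hh lam x i * y i) / mu.
  by field; rewrite gt_eqF.
apply: divr_gt0 => //; lra.
Qed.

End Main.

Lemma xsum_ge0 (R : realType) (V : finType) (adj : rel V) (x : {set V} -> R) (F : {set {set V}}) :
  in_PST adj x -> F \subset Eset adj -> 0 <= xsum x F.
Proof. move=> [hx _ _] /subsetP sF; apply: sumr_ge0 => A /sF; exact: hx. Qed.

Theorem lemma7 (R : realType) (V : finType) (adj : rel V)
  (Hsym : symmetric adj) (Hirr : irreflexive adj)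
  (Hconn : forall u v : V, connect adj u v)
  (l : nat) (S : 'I_l -> {set V})
  (Hchain : forall i j : 'I_l, (i < j)%N -> S i \proper S j)
  (Htop : forall i : 'I_l, S i \proper [set: V])
  (b : 'I_l -> int) (c : {set V} -> R)
  (Hc : forall e, e \in Eset adj -> 0 <= c e)
  (lam : R) (Hlam : 1 < lam)
  (Hfeas : exists x : {set V} -> R, feasible adj S b 1 x)
  (ystar : 'I_l -> R) (Hy0 : forall i, 0 <= ystar i)
  (Hopt : forall y : 'I_l -> R, (forall i, 0 <= y i) ->
            glag adj S b c lam y <= glag adj S b c lam ystar) :
  \sum_(i < l) (b i)%:~R * ystar i <=
    (OPT adj S b c 1 - OPT adj S b c lam) / (lam - 1).
Proof.
have [x1 Hx1] := Hfeas.
have hb : forall i, 0 <= (b i)%:~R :> R.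
  move=> i; have := Hx1.2 i; rewrite mul1r; apply: le_trans.
  exact: xsum_ge0 Hx1.1 (delta_sub _ _ _).
have Hx1l : feasible adj S b lam x1.
  split; first exact: Hx1.1.
  move=> i; apply: le_trans (Hx1.2 i) _; by rewrite ler_wpM2r // ltW.
pose E y := [set cost adj c x + \sum_(i < l) (xsum x (delta adj (S i)) - lam * (b i)%:~R) * y i
      | x in [set x | in_PST adj x]]%classic.
have HG : OPT adj S b c lam <= glag adj S b c lam ystar.
  rewrite leNgt; apply/negP => hlt.
  pose z := (glag adj S b c lam ystar + OPT adj S b c lam) / 2.
  have hz : z < OPT adj S b c lam by rewrite /z; lra.
  have [y [hy Hy]] := @duality R V adj l S b c lam z x1 Hc Hx1l hz.
  have : z <= glag adj S b c lam y.
    apply: (@lb_le_inf _ (E y)); first by exists (cost adj c x1 + \sum_i (xsum x1 (delta adj (S i)) - lam * (b i)%:~R) * y i), x1; [exact: Hx1.1|].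
    move=> _ [x hx <-]; apply: ltW; exact: Hy x hx.
  have := Hopt y hy; rewrite /z; lra.
have HW : forall x, feasible adj S b 1 x ->
    (lam - 1) * \sum_(i < l) (b i)%:~R * ystar i + OPT adj S b c lam <= cost adj c x.
  move=> x hx.
  have : glag adj S b c lam ystar <= cost adj c x +
      \sum_(i < l) (xsum x (delta adj (S i)) - lam * (b i)%:~R) * ystar i.
    apply: (@ge_inf _ (E ystar)); last by exists x => //; exact: hx.1.
    exists (\sum_(i < l) (- (lam * (b i)%:~R)) * ystar i) => _ [x' hx' <-].
    rewrite -[X in X <= _]add0r lerD ?cost_ge0 //.
    apply: ler_sum => i _; apply: ler_wpM2r => //; rewrite -[X in X <= _]add0r lerD2r.
    exact: xsum_ge0 hx' (delta_sub _ _ _).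
  have : \sum_(i < l) (xsum x (delta adj (S i)) - lam * (b i)%:~R) * ystar i <=
     \sum_(i < l) ((1 - lam) * (b i)%:~R) * ystar i.
    apply: ler_sum => i _; apply: ler_wpM2r => //.
    by rewrite mulrBl mul1r lerD2r; have := hx.2 i; rewrite mul1r.
  have -> : \sum_(i < l) ((1 - lam) * (b i)%:~R) * ystar i =
     (1 - lam) * \sum_(i < l) (b i)%:~R * ystar i.
    by rewrite mulr_sumr; apply: eq_bigr => i _; rewrite mulrA.
  move: HG; lra.
have HO : (lam - 1) * \sum_(i < l) (b i)%:~R * ystar i + OPT adj S b c lam <= OPT adj S b c 1.
  apply: lb_le_inf; first by exists (cost adj c x1), x1.
  by move=> _ [x hx <-]; exact: HW.
rewrite ler_pdivlMr ?subr_gt0 //; move: HO; rewrite mulrC; lra.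
Qed.
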